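(* Let $P,Q$ be join-semilattices with a least element. Then: (1) $Q$ is embeddable in $P$ by a join-preserving map (an injective $f$ with $f(x\vee y)=f(x)\vee f(y)$) if and only if $Q$ is embeddable in $P$ by a map preserving finite joins. (2) If $Q$ is embeddable in $P$ by a join-preserving map, then $J(Q)$ is embeddable in $J(P)$ by a map preserving arbitrary joins. Suppose moreover $Q=I_{<\omega}(R)$ for some poset $R$. Then: (3) $Q$ is embeddable in $P$ as a poset if and only if $Q$ is embeddable in $P$ by a map preserving finite joins. (4) $J(Q)$ is embeddable in $J(P)$ as a poset if and only if $J(Q)$ is embeddable in $J(P)$ by a map preserving arbitrary joins. (5) If $\downarrow x$ is finite for every $x\in R$, then $Q$ is embeddable in $P$ as a poset if and only if $J(Q)$ is embeddable in $J(P)$ as a poset.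
   Context: A map preserves finite (resp. arbitrary) joins if $f(\bigvee X)=\bigvee\{f(x):x\in X\}$ for every finite (resp. arbitrary) subset $X$. An ideal is a non-empty up-directed initial segment; $J(\cdot)$ denotes the set of ideals ordered by inclusion. For a poset $R$, $I_{<\omega}(R)$ is the set of finitely generated initial segments $\downarrow A$ ($A\subseteq R$ finite) ordered by inclusion, a join-semilattice with join $=$ union and least element $\emptyset$; $\downarrow x=\{y\in R: y\le x\}$. Embedding as a poset means order-embedding. *)

(* Defs.v *)
From HB Require Import structures.
From mathcomp Require Import all_boot all_order.
From mathcomp Require Import boolp classical_sets cardinality.
Import Order.Theory.

Set Implicit Arguments.
Unset Strict Implicit.
Unset Printing Implicit Defensive.

Local Open Scope classical_set_scope.
Local Open Scope order_scope.

Definition is_lub (A : Type) (le : A -> A -> Prop) (X : set A) (a : A) : Prop :=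
  (forall x, X x -> le x a) /\ (forall b, (forall x, X x -> le x b) -> le a b).

Definition is_ideal d (T : porderType d) (I : set T) : Prop :=
  [/\ exists x, I x,
      (forall x y, (y <= x)%O -> I x -> I y) &
      (forall x y, I x -> I y -> exists z, [/\ I z, (x <= z)%O & (y <= z)%O])].

Definition ideal_of d (T : porderType d) := {I : set T | is_ideal I}.

Definition ideal_le d (T : porderType d) (I J : ideal_of T) : Prop :=
  proj1_sig I `<=` proj1_sig J.

Definition fg_downset d (R : porderType d) (A : set R) : Prop :=
  exists s : seq R, A = [set y | exists2 x, x \in s & (y <= x)%O].

(* Q is (order-isomorphic to) I_{<omega}(R), ordered by inclusion. *)
Definition is_Ifin dQ (Q : porderType dQ) dR (R : porderType dR) : Prop :=
  exists phi : Q -> set R,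
    [/\ forall q, fg_downset (phi q),
        forall A, fg_downset A -> exists q, phi q = A &
        forall q1 q2, (q1 <= q2)%O <-> phi q1 `<=` phi q2].

Definition join_preserving dQ (Q : bJoinSemilatticeType dQ)
    dP (P : bJoinSemilatticeType dP) (f : Q -> P) : Prop :=
  forall x y, f (x `|` y)%O = (f x `|` f y)%O.

Definition fin_join_preserving dQ (Q : bJoinSemilatticeType dQ)
    dP (P : bJoinSemilatticeType dP) (f : Q -> P) : Prop :=
  forall s : seq Q, f (\join_(x <- s) x)%O = (\join_(x <- s) f x)%O.

Definition emb_join dQ (Q : bJoinSemilatticeType dQ)
    dP (P : bJoinSemilatticeType dP) : Prop :=
  exists f : Q -> P, injective f /\ join_preserving f.

Definition emb_finjoin dQ (Q : bJoinSemilatticeType dQ)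
    dP (P : bJoinSemilatticeType dP) : Prop :=
  exists f : Q -> P, injective f /\ fin_join_preserving f.

Definition emb_poset dQ (Q : porderType dQ) dP (P : porderType dP) : Prop :=
  exists f : Q -> P, forall x y, (x <= y)%O <-> (f x <= f y)%O.

Definition emb_ideal_poset dQ (Q : porderType dQ) dP (P : porderType dP) : Prop :=
  exists F : ideal_of Q -> ideal_of P,
    forall I J, ideal_le I J <-> ideal_le (F I) (F J).

Definition emb_ideal_join dQ (Q : porderType dQ) dP (P : porderType dP) : Prop :=
  exists F : ideal_of Q -> ideal_of P,
    injective F /\
    forall (X : set (ideal_of Q)) (I : ideal_of Q),
      is_lub (@ideal_le _ Q) X I -> is_lub (@ideal_le _ P) (F @` X) (F I).

(* Main.v *)
Require Import Defs.
From HB Require Import structures.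
From mathcomp Require Import all_boot all_order.
From mathcomp Require Import boolp classical_sets cardinality.
From Stdlib Require List.
Import Order.Theory.

Section Aux.
Local Set Implicit Arguments.
Local Unset Strict Implicit.
Local Open Scope classical_set_scope.
Local Open Scope order_scope.

Lemma bigjoin_ub d (T : bJoinSemilatticeType d) (A : Type) (F : A -> T) (s : seq A) :
  forall u, (forall x, List.In x s -> F x <= u) -> \join_(x <- s) F x <= u.
Proof.
elim: s => [|a s IH] u H; first by rewrite big_nil le0x.
rewrite big_cons leUx H /=; last by left.
by apply: IH => x Hx; apply: H; right.
Qed.

Lemma bigjoin_ge d (T : bJoinSemilatticeType d) (A : Type) (F : A -> T) (s : seq A) :
  forall x, List.In x s -> F x <= \join_(y <- s) F y.
Proof.
elim: s => [|a s IH] x //= [->|Hx]; rewrite big_cons; first exact: leUl.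
exact: le_trans (IH _ Hx) (leUr _ _).
Qed.

Lemma ideal_bot d (T : bJoinSemilatticeType d) (I : set T) : is_ideal I -> I \bot.
Proof. by case=> [[x Ix] Hd _]; apply: (Hd x) => //; exact: le0x. Qed.

Lemma join_big_ideal d (T : bJoinSemilatticeType d) (A : Type) (F : A -> T)
  (I : set T) (s : seq A) :
  is_ideal I -> (forall x, List.In x s -> I (F x)) -> I (\join_(x <- s) F x).
Proof.
move=> HI; elim: s => [|a s IH] H; first by rewrite big_nil; exact: ideal_bot.
rewrite big_cons.
have Ia : I (F a) by apply: H; left.
have Is : I (\join_(x <- s) F x) by apply: IH => x Hx; apply: H; right.
case: HI => _ Hd Hdir.
have [z [Iz H1 H2]] := Hdir _ _ Ia Is.
by apply: (Hd z) => //; rewrite leUx H1 H2.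
Qed.

Definition gen d (T : bJoinSemilatticeType d) (S : set T) : set T :=
  [set p | exists s : seq T, (forall x, List.In x s -> S x) /\ p <= \join_(x <- s) x].

Lemma gen_ideal d (T : bJoinSemilatticeType d) (S : set T) : is_ideal (gen S).
Proof.
split.
- by exists \bot; exists [::]; split => //; rewrite big_nil.
- move=> x y yx [s [Hs xs]]; exists s; split => //; exact: le_trans xs.
- move=> x y [s1 [H1 x1]] [s2 [H2 y2]]; exists (\join_(z <- s1 ++ s2) z); split.
  + exists (s1 ++ s2); split => // z Hz; case: (List.in_app_or _ _ _ Hz) => ?; [exact: H1|exact: H2].
  + rewrite big_cat /=; exact: le_trans x1 (leUl _ _).
  + rewrite big_cat /=; exact: le_trans y2 (leUr _ _).
Qed.

Lemma gen_sub d (T : bJoinSemilatticeType d) (S : set T) x : S x -> gen S x.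
Proof. by move=> Sx; exists [:: x]; split; [move=> z [<-|]|rewrite big_cons big_nil joinx0]. Qed.

Lemma gen_least d (T : bJoinSemilatticeType d) (S B : set T) :
  is_ideal B -> S `<=` B -> gen S `<=` B.
Proof.
move=> HB SB x [s [Hs xs]].
have := @join_big_ideal _ _ _ id B s HB (fun z Hz => SB _ (Hs z Hz)).
by case: HB => _ Hd _; apply: Hd.
Qed.

Lemma ideal_down d (T : porderType d) (I : set T) x y :
  is_ideal I -> y <= x -> I x -> I y.
Proof. by case=> _ Hd _; apply: Hd. Qed.

Lemma idown d (T : porderType d) (I : ideal_of T) x y :
  y <= x -> proj1_sig I x -> proj1_sig I y.
Proof. exact: ideal_down (proj2_sig I). Qed.

Definition mkI d (T : porderType d) (S : set T) (H : is_ideal S) : ideal_of T :=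
  exist _ S H.

Lemma ideal_eq d (T : porderType d) (I J : ideal_of T) :
  proj1_sig I = proj1_sig J -> I = J.
Proof.
case: I J => [I HI] [J HJ] /= E; subst J.
by rewrite (Prop_irrelevance HI HJ).
Qed.

Lemma ideal_anti d (T : porderType d) (I J : ideal_of T) :
  ideal_le I J -> ideal_le J I -> I = J.
Proof. by move=> H1 H2; apply: ideal_eq; rewrite eqEsubset. Qed.

Definition bigU d (T : porderType d) (X : set (ideal_of T)) : set T :=
  [set x | exists J, X J /\ proj1_sig J x].

Lemma lub_sub_gen d (T : bJoinSemilatticeType d) (X : set (ideal_of T)) I :
  is_lub (@ideal_le _ T) X I -> proj1_sig I `<=` gen (bigU X).
Proof.
case=> _ H; apply: (H (mkI (@gen_ideal _ _ (bigU X)))) => J XJ x Jx /=.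
by apply: gen_sub; exists J.
Qed.


Lemma finjoin_join dQ (Q : bJoinSemilatticeType dQ) dP (P : bJoinSemilatticeType dP)
  (f : Q -> P) : fin_join_preserving f -> join_preserving f /\ f \bot = \bot.
Proof.
move=> H; split; last by have := H [::]; rewrite !big_nil.
by move=> x y; have := H [:: x; y]; rewrite !big_cons !big_nil !joinx0.
Qed.

Lemma join_inj_emb dQ (Q : bJoinSemilatticeType dQ) dP (P : bJoinSemilatticeType dP)
  (f : Q -> P) : injective f -> join_preserving f ->
  forall x y, x <= y <-> f x <= f y.
Proof.
move=> Hi Hj x y; split => H.
  by rewrite -(join_r H) Hj leUl.
by apply/join_idPr; apply: Hi; rewrite Hj; apply/join_idPr.
Qed.

Lemma part1 dQ (Q : bJoinSemilatticeType dQ) dP (P : bJoinSemilatticeType dP) :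
  emb_join Q P <-> emb_finjoin Q P.
Proof.
split; last first.
  by case=> f [Hi Hf]; exists f; split => //; case: (finjoin_join Hf).
case=> f [Hi Hj].
have fb : forall x, f x = \bot -> x = \bot.
  move=> x Hx; apply: Hi; have := Hj \bot x.
  by rewrite join0x Hx joinx0 => ->.
pose g x := if x == \bot then \bot else f x.
have gj : join_preserving g.
  move=> x y; rewrite /g.
  case: (eqVneq x \bot) => [->|nx]; first by rewrite !join0x.
  case: (eqVneq y \bot) => [->|ny]; first by rewrite !joinx0 (negbTE nx).
  have -> : (x `|` y == \bot) = false.
    apply/negbTE/eqP => E; move/eqP: nx; apply.
    by apply/eqP; rewrite -lex0 -E leUl.
  exact: Hj.
exists g; split.
- move=> x y; rewrite /g.
  case: (eqVneq x \bot) => [->|nx]; case: (eqVneq y \bot) => [->|ny] //.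
  + by move/esym/fb => E; rewrite E eqxx in ny.
  + by move/fb => E; rewrite E eqxx in nx.
  + exact: Hi.
- elim=> [|a s IH]; first by rewrite !big_nil /g eqxx.
  by rewrite !big_cons gj IH.
Qed.

Lemma img_ideal dQ (Q : porderType dQ) dP (P : porderType dP) (g : Q -> P)
  (I : set Q) : (forall x y, x <= y -> g x <= g y) -> is_ideal I ->
  is_ideal [set p | exists2 q, I q & p <= g q].
Proof.
move=> gm [[x Ix] Hd Hdir]; split.
- by exists (g x); exists x.
- move=> p p' lp [q Iq pq]; exists q => //; exact: le_trans pq.
- move=> p1 p2 [q1 I1 l1] [q2 I2 l2].
  have [z [Iz z1 z2]] := Hdir _ _ I1 I2.
  exists (g z); split; first by exists z.
  + exact: le_trans l1 (gm _ _ z1).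
  + exact: le_trans l2 (gm _ _ z2).
Qed.

Lemma part2 dQ (Q : bJoinSemilatticeType dQ) dP (P : bJoinSemilatticeType dP) :
  emb_join Q P -> emb_ideal_join Q P.
Proof.
move/part1 => [g [gi gf]].
have [gj _] := finjoin_join gf.
have ge := join_inj_emb gi gj.
have gm : forall x y, x <= y -> g x <= g y by move=> x y /ge.
pose F (I : ideal_of Q) : ideal_of P := mkI (img_ideal gm (proj2_sig I)).
have Fm : forall I J, ideal_le I J -> ideal_le (F I) (F J).
  by move=> I J H p [q Iq pq]; exists q => //; apply: H.
exists F; split.
  have H : forall I J, F I = F J -> ideal_le I J.
    move=> I J E q Iq.
    have : proj1_sig (F J) (g q) by rewrite -E; exists q.
    by case=> q' Jq' /ge qq'; apply: idown qq' Jq'.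
  by move=> I J E; apply: ideal_anti; apply: H; rewrite E.
move=> X I [Hub Hl]; split.
  by move=> y [J XJ <-]; apply: Fm; apply: Hub.
move=> B HB p [q Iq pq].
have [s [Hs qs]] := lub_sub_gen (conj Hub Hl) Iq.
apply: idown pq _; apply: idown (gm _ _ qs) _.
rewrite gf; apply: join_big_ideal; first exact: proj2_sig.
move=> x /Hs [J [XJ Jx]].
by apply: (HB (F J)); [exists J|exists x].
Qed.

Definition pairI d (T : porderType d) (I J : ideal_of T) : set (ideal_of T) :=
  [set K | K = I \/ K = J].

Lemma part4b dQ (Q : bJoinSemilatticeType dQ) dP (P : porderType dP) :
  emb_ideal_join Q P -> emb_ideal_poset Q P.
Proof.
case=> F [Fi Fl]; exists F => I J.
have lubJ : forall d (T : porderType d) (I J : ideal_of T), ideal_le I J ->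
    is_lub (@ideal_le _ T) (pairI I J) J.
  move=> d T I0 J0 H; split; first by move=> K [->|->].
  by move=> b Hb; apply: Hb; right.
split.
  move=> H; case: (Fl _ _ (lubJ _ _ _ _ H)) => Hu _.
  by apply: Hu; exists I => //; left.
move=> H.
pose K := mkI (@gen_ideal _ _ (proj1_sig I `|` proj1_sig J)).
have lK : is_lub (@ideal_le _ Q) (pairI I J) K.
  split; first by move=> K' [->|->] x Hx; apply: gen_sub; [left|right].
  move=> b Hb; apply: gen_least; first exact: proj2_sig.
  by move=> x [Hx|Hx]; [apply: (Hb I); [left|]|apply: (Hb J); [right|]].
have l2 : is_lub (@ideal_le _ P) (F @` pairI I J) (F J).
  split; first by move=> y [K' [->|->] <-] //; move=> x.
  by move=> b Hb; apply: Hb; exists J => //; right.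
case: (Fl _ _ lK) => u1 m1; case: l2 => u2 m2.
have EK : F K = F J by apply: ideal_anti; [apply: m1|apply: m2].
by rewrite -(Fi _ _ EK) => x Ix; apply: gen_sub; left.
Qed.


Lemma In_mem (T : eqType) (x : T) (s : seq T) : List.In x s <-> x \in s.
Proof.
elim: s => [|a s IH] //=; rewrite in_cons; split.
- by case=> [->|/IH ->]; rewrite ?eqxx ?orbT.
- by case/orP => [/eqP ->|/IH]; [left|right].
Qed.

Section Phi.
Variables (dR : Order.disp_t) (R : porderType dR) (dQ : Order.disp_t)
  (Q : bJoinSemilatticeType dQ) (phi : Q -> set R).
Hypothesis Hphi : [/\ (forall q, fg_downset (phi q)),
  (forall A, fg_downset A -> exists q, phi q = A) &
  (forall q1 q2, q1 <= q2 <-> phi q1 `<=` phi q2)].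

Definition span (s : seq R) : set R := [set y | exists2 x, x \in s & y <= x].

Lemma phi_fg q : exists s, phi q = span s.
Proof. by case: Hphi => H _ _; case: (H q) => s E; exists s. Qed.

Lemma phi_surj s : exists q, phi q = span s.
Proof. by case: Hphi => _ H _; apply: H; exists s. Qed.

Lemma phi_le q1 q2 : q1 <= q2 <-> phi q1 `<=` phi q2.
Proof. by case: Hphi. Qed.

Lemma phi_down q x y : y <= x -> phi q x -> phi q y.
Proof.
case: (phi_fg q) => s -> yx [z zs xz]; exists z => //; exact: le_trans xz.
Qed.

Lemma phi_empty : exists q0, forall a, ~ phi q0 a.
Proof. by case: (phi_surj [::]) => q0 E; exists q0 => a; rewrite E; case. Qed.

Lemma phi_bot a : ~ phi \bot a.
Proof.
case: phi_empty => q0 H Ha; apply: (H a); exact: (iffLR (phi_le \bot q0) (le0x _)).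
Qed.

Lemma phi_join q1 q2 : exists q3, [/\ q1 <= q3, q2 <= q3 &
  forall a, phi q3 a -> phi q1 a \/ phi q2 a].
Proof.
case: (phi_fg q1) => s1 E1; case: (phi_fg q2) => s2 E2.
case: (phi_surj (s1 ++ s2)) => q3 E3; exists q3; split.
- by apply/phi_le; rewrite E1 E3 => y [x xs yx]; exists x; rewrite ?mem_cat ?xs.
- by apply/phi_le; rewrite E2 E3 => y [x xs yx]; exists x; rewrite ?mem_cat ?xs ?orbT.
- rewrite E1 E2 E3 => a [x]; rewrite mem_cat => /orP [] xs ax; [left|right]; exists x => //.
Qed.

Lemma phi_dn a : exists q, phi q = [set y | y <= a].
Proof.
case: (phi_surj [:: a]) => q E; exists q; rewrite E eqEsubset; split.
- by move=> y [x]; rewrite inE => /eqP ->.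
- by move=> y ya; exists a; rewrite ?inE.
Qed.

Definition sq (q : Q) : seq R := sval (cid (phi_fg q)).
Lemma sqE q : phi q = span (sq q).
Proof. exact: (svalP (cid (phi_fg q))). Qed.
Lemma sq_in q x : x \in sq q -> phi q x.
Proof. by rewrite sqE => xs; exists x. Qed.

Section Gh.
Variables (dP : Order.disp_t) (P : bJoinSemilatticeType dP) (h : R -> P).
Hypothesis hm : forall x y, x <= y -> h x <= h y.
Definition gh (q : Q) : P := \join_(x <- sq q) h x.

Lemma gh_ub q a : phi q a -> h a <= gh q.
Proof.
rewrite sqE => -[x xs ax]; apply: le_trans (hm ax) _.
by apply: bigjoin_ge; apply/In_mem.
Qed.

Lemma gh_lub q u : (forall a, phi q a -> h a <= u) -> gh q <= u.
Proof. by move=> H; apply: bigjoin_ub => x /In_mem /sq_in; apply: H. Qed.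

Lemma gh_mono q1 q2 : q1 <= q2 -> gh q1 <= gh q2.
Proof. by move/phi_le => H; apply: gh_lub => a /H; apply: gh_ub. Qed.

Lemma gh_in (I : set P) q : is_ideal I -> (forall x, phi q x -> I (h x)) -> I (gh q).
Proof. by move=> HI H; apply: join_big_ideal => // x /In_mem /sq_in; apply: H. Qed.
End Gh.

Definition idlS (D : set R) : set Q := [set q | phi q `<=` D].
Lemma idl_ideal D : is_ideal (idlS D).
Proof.
split.
- by case: phi_empty => q0 H; exists q0 => a /H.
- by move=> x y /phi_le yx Hx a /yx /Hx.
- move=> x y Hx Hy; case: (phi_join x y) => z [xz yz Hz]; exists z; split => //.
  by move=> a /Hz [/Hx|/Hy].
Qed.
Definition idl D : ideal_of Q := mkI (idl_ideal D).

Lemma idl_mono D E : D `<=` E -> ideal_le (idl D) (idl E).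
Proof. by move=> DE q /= H a /H /DE. Qed.

Definition dwn (a : R) : set R := [set y | y <= a].

Lemma idl_below (I : ideal_of Q) q a : proj1_sig I q -> phi q a -> ideal_le (idl (dwn a)) I.
Proof.
move=> Iq qa q' /= H; apply: idown Iq; apply/phi_le => y /H ya.
exact: phi_down ya qa.
Qed.

Lemma idl_dn a : exists q, proj1_sig (idl (dwn a)) q /\ phi q a.
Proof.
case: (phi_dn a) => q E; exists q; split; first by move=> y; rewrite E.
by rewrite E; exact: lexx.
Qed.

Lemma cover_list (J : ideal_of Q) (s : seq R) :
  (forall x, x \in s -> exists q', proj1_sig J q' /\ phi q' x) ->
  exists z, proj1_sig J z /\ forall x, x \in s -> phi z x.
Proof.
elim: s => [|a s IH] H.
  by case: (proj2_sig J) => -[z Jz] _ _; exists z.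
case: (H a (mem_head _ _)) => qa [Ja pa].
case: IH => [x xs|z [Jz Hz]]; first by apply: H; rewrite in_cons xs orbT.
case: (proj2_sig J) => _ _ /(_ _ _ Ja Jz) [w [Jw /phi_le aw /phi_le zw]].
exists w; split => // x; rewrite in_cons => /orP [/eqP ->|/Hz]; [exact: aw|exact: zw].
Qed.

Lemma cover (J : ideal_of Q) q :
  (forall a, phi q a -> exists q', proj1_sig J q' /\ phi q' a) -> proj1_sig J q.
Proof.
move=> H; case: (@cover_list J (sq q)) => [x /sq_in|z [Jz Hz]]; first exact: H.
apply: idown Jz; apply/phi_le; rewrite sqE => a [x /Hz xz ax]; exact: phi_down ax xz.
Qed.


Lemma part3f dP (P : bJoinSemilatticeType dP) : emb_poset Q P -> emb_finjoin Q P.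
Proof.
case=> f Hf.
have fm : forall x y, x <= y -> f x <= f y by move=> x y /Hf.
pose dn a := sval (cid (phi_dn a)).
have dnE : forall a, phi (dn a) = dwn a by move=> a; exact: (svalP (cid (phi_dn a))).
pose h a := f (dn a).
have hm : forall x y, x <= y -> h x <= h y.
  move=> x y xy; apply: fm; apply/phi_le; rewrite !dnE => z zx; exact: le_trans zx xy.
pose g := gh h.
have dnle : forall q a, phi q a -> dn a <= q.
  by move=> q a qa; apply/phi_le; rewrite dnE => y ya; exact: phi_down ya qa.
have gle : forall q, g q <= f q.
  by move=> q; apply: gh_lub => a /dnle /fm.
have key : forall q1 q2, g q1 <= g q2 -> q1 <= q2.
  move=> q1 q2 H; apply/phi_le => a a1.
  have : h a <= f q2 := le_trans (gh_ub hm a1) (le_trans H (gle q2)).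
  by move/Hf/phi_le; rewrite dnE; apply; exact: lexx.
exists g; split.
  by move=> x y E; apply: le_anti; rewrite !key // E lexx.
have gb : g \bot = \bot.
  by apply/eqP; rewrite -lex0; apply: gh_lub => a /phi_bot.
have gj : forall x y, g (x `|` y) = g x `|` g y.
  move=> x y; apply/eqP; rewrite eq_le; apply/andP; split.
  - apply: gh_lub => a Ha; case: (phi_join x y) => z [xz yz Hz].
    have : x `|` y <= z by rewrite leUx xz yz.
    move/phi_le/(_ a Ha)/Hz => [/(gh_ub hm) H|/(gh_ub hm) H].
    + exact: le_trans H (leUl _ _).
    + exact: le_trans H (leUr _ _).
  - by rewrite leUx !(gh_mono hm) // ?leUl ?leUr.
elim=> [|a s IH]; first by rewrite !big_nil.
by rewrite !big_cons gj IH.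
Qed.

Lemma part4f dP (P : bJoinSemilatticeType dP) :
  emb_ideal_poset Q P -> emb_ideal_join Q P.
Proof.
case=> F HF.
have Fm : forall I J, ideal_le I J -> ideal_le (F I) (F J) by move=> I J /HF.
pose S (I : ideal_of Q) : set P := [set p | exists q a,
  [/\ proj1_sig I q, phi q a & proj1_sig (F (idl (dwn a))) p]].
pose G I := mkI (@gen_ideal _ _ (S I)).
have GsubF : forall I, gen (S I) `<=` proj1_sig (F I).
  move=> I; apply: gen_least; first exact: proj2_sig.
  by move=> p [q [a [Iq qa Fp]]]; apply: (Fm _ _ (idl_below Iq qa)).
have Gmono : forall I J, ideal_le I J -> ideal_le (G I) (G J).
  move=> I J IJ; apply: gen_least; first exact: gen_ideal.
  by move=> p [q [a [Iq qa Fp]]]; apply: gen_sub; exists q, a; split => //; apply: IJ.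
have refl : forall I J, ideal_le (G I) (G J) -> ideal_le I J.
  move=> I J H q Iq; apply: cover => a qa.
  have : ideal_le (F (idl (dwn a))) (F J).
    by move=> p Fp; apply: GsubF; apply: H; apply: gen_sub; exists q, a.
  move/HF => H'; case: (idl_dn a) => q' [Hq' q'a]; exists q'; split => //.
  exact: H'.
exists G; split.
  by move=> I J E; apply: ideal_anti; apply: refl; rewrite E.
move=> X I [Hub Hl]; split.
  by move=> y [J XJ <-]; apply: Gmono; apply: Hub.
move=> B HB; apply: gen_least; first exact: proj2_sig.
move=> p [q [a [Iq qa Fp]]].
pose Ks := [set q | forall a, phi q a -> exists J, X J /\ exists2 q', proj1_sig J q' & phi q' a].
have Ki : is_ideal Ks.
  split.
  - by case: phi_empty => q0 H; exists q0 => b /H.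
  - by move=> x y /phi_le yx Hx b /yx /Hx.
  - move=> x y Hx Hy; case: (phi_join x y) => z [xz yz Hz]; exists z; split => //.
    by move=> b /Hz [/Hx|/Hy].
have : ideal_le I (mkI Ki).
  by apply: Hl => J XJ x Jx b xb; exists J; split => //; exists x.
move/(_ q Iq a qa) => [J [XJ [q' Jq' q'a]]].
by apply: (HB (G J)); [exists J|apply: gen_sub; exists q', a].
Qed.

Lemma part5b dP (P : bJoinSemilatticeType dP) :
  (forall x : R, finite_set [set y : R | y <= x]) ->
  emb_ideal_poset Q P -> emb_poset Q P.
Proof.
move=> Hfin [F HF].
have Fm : forall I J, ideal_le I J -> ideal_le (F I) (F J) by move=> I J /HF.
pose D2 (a : R) := [set y : R | ~ (a <= y)].
have ex : forall a, exists p, proj1_sig (F (idl (dwn a))) p /\ ~ proj1_sig (F (idl (D2 a))) p.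
  move=> a; apply: contrapT => Hn.
  have : ideal_le (F (idl (dwn a))) (F (idl (D2 a))).
    by move=> p Hp; apply: contrapT => Hp'; apply: Hn; exists p.
  move/HF => H; case: (idl_dn a) => q [Hq qa].
  by apply: (H q Hq a qa); exact: lexx.
pose pa a := sval (cid (ex a)).
have paP : forall a, proj1_sig (F (idl (dwn a))) (pa a) /\ ~ proj1_sig (F (idl (D2 a))) (pa a).
  by move=> a; exact: (svalP (cid (ex a))).
pose sx x := sval (cid (iffLR (finite_seqP _) (Hfin x))).
have sxE : forall x y, (y \in sx x) = (y <= x).
  move=> x y; have := svalP (cid (iffLR (finite_seqP _) (Hfin x))).
  rewrite -/(sx x) => E; apply/idP/idP.
  + by move=> H; have : [set` sx x] y by []; rewrite -E.
  + by move=> H; have : [set z : R | z <= x] y by []; rewrite E.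
pose h x := \join_(a <- sx x) pa a.
have hm : forall x y, x <= y -> h x <= h y.
  move=> x y xy; apply: bigjoin_ub => a /In_mem; rewrite sxE => ax.
  by apply: bigjoin_ge; apply/In_mem; rewrite sxE (le_trans ax xy).
have hin : forall x, proj1_sig (F (idl (dwn x))) (h x).
  move=> x; apply: join_big_ideal; first exact: proj2_sig.
  move=> a /In_mem; rewrite sxE => ax; apply: (Fm (idl (dwn a))); last exact: (paP a).1.
  by apply: idl_mono => y ya; exact: le_trans ya ax.
have hge : forall x, pa x <= h x.
  by move=> x; apply: bigjoin_ge; apply/In_mem; rewrite sxE lexx.
exists (gh h) => q1 q2; split; first exact: gh_mono.
move=> H; apply/phi_le => a a1; apply: contrapT => a2.
have gin : proj1_sig (F (idl (phi q2))) (gh h q2).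
  apply: gh_in; first exact: proj2_sig.
  move=> x x2; apply: (Fm (idl (dwn x))); last exact: hin.
  by apply: idl_mono => y yx; exact: phi_down yx x2.
have sub : phi q2 `<=` D2 a by move=> b b2 ab; apply: a2; exact: phi_down ab b2.
apply: (paP a).2; apply: (Fm _ _ (idl_mono sub)).
apply: idown gin; exact: le_trans (hge a) (le_trans (gh_ub hm a1) H).
Qed.

End Phi.

End Aux.

Theorem proposition1p3 (dP dQ : Order.disp_t)
    (P : bJoinSemilatticeType dP) (Q : bJoinSemilatticeType dQ) :
  (emb_join Q P <-> emb_finjoin Q P) /\
  (emb_join Q P -> emb_ideal_join Q P) /\
  (forall (dR : Order.disp_t) (R : porderType dR), is_Ifin Q R ->
     [/\ emb_poset Q P <-> emb_finjoin Q P,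
         emb_ideal_poset Q P <-> emb_ideal_join Q P &
         ((forall x : R, finite_set [set y : R | (y <= x)%O]) ->
            (emb_poset Q P <-> emb_ideal_poset Q P))]).
Proof.
split; first exact: part1.
split; first exact: part2.
move=> dR R [phi Hphi].
have p3 : emb_poset Q P <-> emb_finjoin Q P.
  split; first exact: (@part3f _ _ _ _ phi Hphi _ P).
  by case=> f [fi ff]; exists f; case: (finjoin_join ff) => fj _; exact: join_inj_emb.
split => //.
- split; first exact: (@part4f _ _ _ _ phi Hphi _ P).
  exact: part4b.
- move=> Hfin; split.
  + by move/p3/part1/part2/part4b.
  + exact: (@part5b _ _ _ _ phi Hphi _ P Hfin).
Qed.
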